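(* Let $X$ be a compact metric space and $f:X\dashrightarrow X$ a continuous open-dense defined map which is good with respect to iterates. Let $\mu$ be an $f$-invariant Borel probability measure on $X$ with $\mu(I_\infty(f))=0$. Then there exists a unique Borel measure $\hat\mu$ on $\Gamma_{f,\infty}$ such that $(\pi_1)_*(\hat\mu)\le\mu$, $\hat\mu(\Gamma_{f,\infty})=1$ and $(\sigma_f)_*(\hat\mu)=\hat\mu$. Moreover $h_\mu(f)=h_{\hat\mu}(\sigma_f)$.
   Context: A continuous open-dense defined map $f:X\dashrightarrow X$ is a continuous map $f:\mathrm{OpenDom}(f)\to X$ with $\mathrm{OpenDom}(f)$ open dense; $I(f)=X\setminus\mathrm{OpenDom}(f)$. Let $\Omega_{f,\infty}=\{x\in\mathrm{OpenDom}(f):f^n(x)\notin I(f)\ \forall n\in\mathbb{N}\}$ and $I_\infty(f)=X\setminus\Omega_{f,\infty}$; $f$ is good with respect to iterates if $\Omega_{f,\infty}$ is dense and $I_\infty(f)$ is nowhere dense. $\Gamma_{f,\infty}$ is the closure in $X^{\mathbb{N}}$ (product topology, a compact metrizable space) of $\{(x,f(x),f^2(x),\ldots):x\in\Omega_{f,\infty}\}$; $\sigma_f:\Gamma_{f,\infty}\to\Gamma_{f,\infty}$ is the shift $(x_1,x_2,\ldots)\mapsto(x_2,x_3,\ldots)$ and $\pi_1(x_1,x_2,\ldots)=x_1$. $f$-invariance of $\mu$ means $f_*\mu=\mu$, where for a measure with no mass on $I(f)$, $f_*\mu(\varphi)=\int_{X\setminus I(f)}\varphi\circ f\,d\mu$.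 $h_\mu(f)$ is the Kolmogorov–Sinai entropy of the measure-preserving map $f:\Omega_{f,\infty}\to\Omega_{f,\infty}$ with respect to $\mu$, and $h_{\hat\mu}(\sigma_f)$ is the Kolmogorov–Sinai entropy of $\sigma_f$ with respect to $\hat\mu$. For measures, $\le$ means inequality of integrals against all continuous functions (equivalently on all Borel sets). *)

(* Defs.v *)
From HB Require Import structures.
From mathcomp Require Import all_boot all_order all_algebra.
From mathcomp Require Import all_classical all_reals all_analysis.

Set Implicit Arguments.
Unset Strict Implicit.
Unset Printing Implicit Defensive.

Import Order.TTheory GRing.Theory Num.Theory.
Import numFieldNormedType.Exports.
Local Open Scope classical_set_scope.
Local Open Scope ring_scope.

Notation Borel T := (g_sigma_algebraType (@open T)).

(* U is OpenDom(f); f : X -> X is total, but only its values on U matter. *)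
Definition open_dense_defined_map (X : topologicalType) (U : set X) (f : X -> X)
  : Prop :=
  open U /\ closure U = setT /\ {within U, continuous f}.

Definition Omega_inf (X : Type) (U : set X) (f : X -> X) : set X :=
  [set x | forall n : nat, U (iter n f x)].

Definition I_inf (X : Type) (U : set X) (f : X -> X) : set X :=
  ~` Omega_inf U f.

Definition good_wrt_iterates (X : topologicalType) (U : set X) (f : X -> X)
  : Prop :=
  closure (Omega_inf U f) = setT /\ interior (closure (I_inf U f)) = set0.

Definition orbit_seq (X : Type) (f : X -> X) (x : X) : nat -> X :=
  fun n => iter n f x.

Definition Gamma_inf (X : topologicalType) (U : set X) (f : X -> X)
  : set {ptws nat -> X} :=
  closure [set (orbit_seq f x : {ptws nat -> X}) | x in Omega_inf U f].

Definition shift_seq (X : Type) (s : nat -> X) : nat -> X := fun n => s n.+1.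

Definition proj1_seq (X : Type) (s : nat -> X) : X := s 0%N.

(* f-invariance of mu (mu has no mass on I(f) = ~` U):
   f_* mu (B) = mu (U /\ f^-1 B) = mu B for every Borel B. *)
Definition f_invariant (X : ptopologicalType) (R : realType)
  (U : set X) (f : X -> X) (mu : set (Borel X) -> \bar R) : Prop :=
  forall B : set (Borel X), measurable B -> mu (U `&` f @^-1` B) = mu B.

Definition eta_ent (R : realType) (x : R) : R := - (x * ln x).

Definition is_fin_partition (S : Type) (M : set (set S)) (D : set S) (k : nat)
  (P : 'I_k -> set S) : Prop :=
  [/\ forall j, M (P j),
      forall j, P j `<=` D,
      forall i j, i != j -> P i `&` P j = set0
    & \bigcup_(j in setT) P j = D].

(* H_m( P v T^-1 P v ... v T^-(n-1) P ): the atoms of the join are indexed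
   by words w : 'I_n -> 'I_k. *)
Definition join_entropy (R : realType) (S : Type) (m : set S -> \bar R)
  (D : set S) (T : S -> S) (k : nat) (P : 'I_k -> set S) (n : nat) : R :=
  \sum_(w : {ffun 'I_n -> 'I_k})
     eta_ent (fine (m [set x | D x /\ forall i : 'I_n, P (w i) (iter i T x)])).

Definition KS_entropy_partition (R : realType) (S : Type) (m : set S -> \bar R)
  (D : set S) (T : S -> S) (k : nat) (P : 'I_k -> set S) : R :=
  let u : R^nat := fun n => join_entropy m D T P n / n%:R in limn u.

Definition KS_entropy (R : realType) (S : Type) (M : set (set S))
  (m : set S -> \bar R) (D : set S) (T : S -> S) : \bar R :=
  ereal_sup [set e | exists (k : nat) (P : 'I_k -> set S),
                       is_fin_partition M D P /\
                       e = (KS_entropy_partition m D T P)%:E].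

(* Main.v *)
Require Import Defs.
From HB Require Import structures.
From mathcomp Require Import all_boot all_order all_algebra.
From mathcomp Require Import all_classical all_reals all_analysis.

Import Order.TTheory GRing.Theory Num.Theory.
Import numFieldNormedType.Exports.
Local Open Scope classical_set_scope.
Local Open Scope ring_scope.

Set Implicit Arguments.
Unset Strict Implicit.

Lemma iter_shift (X : Type) (s : nat -> X) i n :
  iter i (@shift_seq X) s n = s (n + i)%N.
Proof.
elim: i n => [|i IH] n /=; first by rewrite addn0.
by rewrite /shift_seq IH addSnnS.
Qed.

Lemma orbit_iter (X : Type) (f : X -> X) x i :
  orbit_seq f (iter i f x) = iter i (@shift_seq X) (orbit_seq f x).
Proof.
by apply: funext => n; rewrite iter_shift /orbit_seq iterD.
Qed.

Lemma Omega_iter (X : Type) (U : set X) f x i :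
  Omega_inf U f x -> Omega_inf U f (iter i f x).
Proof. by move=> Ox n; rewrite -iterD; apply: Ox. Qed.

Lemma Omega_U (X : Type) (U : set X) f x : Omega_inf U f x -> U x.
Proof. by move=> /(_ 0%N). Qed.

Lemma Omega_f (X : Type) (U : set X) f x :
  Omega_inf U f x -> Omega_inf U f (f x).
Proof. by move=> /(@Omega_iter _ _ _ _ 1%N). Qed.

Lemma ev_nbhs (R : realType) (X : pseudoPMetricType R) (s : {ptws nat -> X}) n (C : set X) :
  nbhs (s n) C -> nbhs s [set t : {ptws nat -> X} | C (t n)].
Proof.
move=> Cn.
have /pointwise_cvgP := (@cvg_id _ (nbhs s)).
move=> /(_ n); apply. exact: Cn.
Qed.

Lemma openX_meas (R : realType) (X : pseudoPMetricType R) (V : set X) :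
  open V -> @measurable _ (Borel X) V.
Proof. by move=> oV; apply: sub_sigma_algebra. Qed.

Lemma openP_meas (R : realType) (X : pseudoPMetricType R)
  (V : set {ptws nat -> X}) :
  open V -> @measurable _ (Borel {ptws nat -> X}) V.
Proof. by move=> oV; apply: sub_sigma_algebra. Qed.

Lemma ev_cont (R : realType) (X : pseudoPMetricType R) n :
  continuous (fun t : {ptws nat -> X} => t n).
Proof. by move=> s C /= Cn; apply: ev_nbhs. Qed.

Lemma ev_meas (R : realType) (X : pseudoPMetricType R) n (B : set X) :
  @measurable _ (Borel X) B ->
  @measurable _ (Borel {ptws nat -> X}) [set t : {ptws nat -> X} | B (t n)].
Proof.
move=> mB.
have : measurable_fun (T := Borel {ptws nat -> X}) (U := Borel X) setT
   (fun t : {ptws nat -> X} => t n).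
  apply: (@measurability _ _ (Borel {ptws nat -> X}) (Borel X) setT _ (@open X)) => //.
  move=> _ [V oV <-]; apply: openP_meas; rewrite setTI.
  by move/continuousP: (@ev_cont R X n); apply.
by move=> /(_ measurableT B mB); rewrite setTI.
Qed.

Fixpoint Wset (X : Type) (U : set X) (f : X -> X) n : set X :=
  if n is m.+1 then U `&` (f @^-1` (Wset U f m)) else U.

Lemma WsetP (X : Type) (U : set X) f n x :
  Wset U f n x <-> forall m, (m <= n)%N -> U (iter m f x).
Proof.
elim: n x => [|n IH] x /=.
  by split=> [Ux [|m]//|H]; exact: (H 0%N).
split.
  move=> [Ux /IH H] [|m] // mn.
  by rewrite iterSr; apply: H.
move=> H; split; first exact: (H 0%N).
by apply/IH => m mn; rewrite -iterSr; apply: H.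
Qed.

Lemma Omega_Wset (X : Type) (U : set X) f :
  Omega_inf U f = \bigcap_n Wset U f n.
Proof.
apply/seteqP; split=> x.
  by move=> Ox n _; apply/WsetP => m _; apply: Ox.
by move=> H m; have /WsetP := H m Logic.I; apply.
Qed.

Lemma Wset_open (X : topologicalType) (U : set X) f n :
  open U -> {within U, continuous f} -> open (Wset U f n).
Proof.
move=> oU cf; rewrite continuous_open_subspace // in cf.
elim: n => [|n IH] //=.
by move/(continuous_inP _ oU): cf; apply.
Qed.

Lemma Omega_meas (R : realType) (X : pseudoPMetricType R) (U : set X) f :
  open U -> {within U, continuous f} ->
  @measurable _ (Borel X) (Omega_inf U f).
Proof.
move=> oU cf; rewrite Omega_Wset; apply: bigcapT_measurable => n.
by apply: openX_meas; apply: Wset_open.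
Qed.

Lemma orbit_cont (R : realType) (X : pseudoPMetricType R) (U : set X) f :
  open U -> {within U, continuous f} ->
  {within Omega_inf U f, continuous (orbit_seq f : X -> {ptws nat -> X})}.
Proof.
move=> oU cf; rewrite continuous_open_subspace // in cf.
apply/subspace_continuousP => x Ox.
apply/pointwise_cvgP => n.
elim: n => [|n IH] /=.
  exact: cvg_within.
have := cf (iter n f x) (mem_set (Omega_U (Omega_iter n Ox))).
move=> cfx.
rewrite /from_subspace /= in IH *.
move: IH; rewrite !nbhs_simpl => IH.
have := cvg_comp _ _ IH cfx.
exact.
Qed.

Lemma orbit_mfun (R : realType) (X : pseudoPMetricType R) (U : set X) f :
  open U -> {within U, continuous f} ->
  measurable_fun (T := Borel X) (U := Borel {ptws nat -> X})
    (Omega_inf U f) (orbit_seq f).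
Proof.
move=> oU cf.
apply: (@measurability _ _ (Borel X) (Borel {ptws nat -> X}) (Omega_inf U f)
   (orbit_seq f) (@open {ptws nat -> X})) => //.
move=> _ [V oV <-].
have /continuousP/(_ V oV) := orbit_cont oU cf.
move=> /open_subspaceP [W oW WE].
rewrite setIC -WE; apply: measurableI; first exact: openX_meas.
exact: Omega_meas.
Qed.

Lemma orbit_meas (R : realType) (X : pseudoPMetricType R) (U : set X) f
  (A : set {ptws nat -> X}) :
  open U -> {within U, continuous f} ->
  @measurable _ (Borel {ptws nat -> X}) A ->
  @measurable _ (Borel X) (Omega_inf U f `&` orbit_seq f @^-1` A).
Proof.
move=> oU cf mA; apply: (orbit_mfun oU cf) => //; exact: Omega_meas.
Qed.

Definition hmeas (R : realType) (X : pseudoPMetricType R) (U : set X) (f : X -> X) :=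
  forall A : set {ptws nat -> X}, @measurable _ (Borel {ptws nat -> X}) A ->
  @measurable _ (Borel X) (Omega_inf U f `&` orbit_seq f @^-1` A).

Definition muh_fun (R : realType) (X : pseudoPMetricType R) (U : set X) (f : X -> X)
  (mu : {measure set (Borel X) -> \bar R}) (hm : hmeas U f) :
  set (Borel {ptws nat -> X}) -> \bar R :=
  fun A => mu (Omega_inf U f `&` orbit_seq f @^-1` A).

Lemma muh0 (R : realType) (X : pseudoPMetricType R) (U : set X) (f : X -> X)
  (mu : {measure set (Borel X) -> \bar R}) (hm : hmeas U f) :
  muh_fun mu hm set0 = 0%E.
Proof. by rewrite /muh_fun preimage_set0 setI0 measure0. Qed.

Lemma muh_ge0 (R : realType) (X : pseudoPMetricType R) (U : set X) (f : X -> X)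
  (mu : {measure set (Borel X) -> \bar R}) (hm : hmeas U f) A :
  (0 <= muh_fun mu hm A)%E.
Proof. by rewrite /muh_fun measure_ge0. Qed.

Lemma muh_sigma (R : realType) (X : pseudoPMetricType R) (U : set X) (f : X -> X)
  (mu : {measure set (Borel X) -> \bar R}) (hm : hmeas U f) :
  semi_sigma_additive (muh_fun mu hm).
Proof.
move=> F mF tF mUF; rewrite /muh_fun preimage_bigcup setI_bigcupr.
apply: measure_semi_sigma_additive.
- by move=> n; apply: hm.
- apply/trivIsetP => /= i j _ _ ij.
  rewrite setIACA setIid -preimage_setI.
  by move/trivIsetP : tF => /(_ _ _ _ _ ij) ->//; rewrite preimage_set0 setI0.
- by rewrite -setI_bigcupr -preimage_bigcup; apply: hm.
Qed.

HB.instance Definition _ (R : realType) (X : pseudoPMetricType R) (U : set X) (f : X -> X)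
  (mu : {measure set (Borel X) -> \bar R}) (hm : hmeas U f) :=
  isMeasure.Build _ _ _ (muh_fun mu hm) (muh0 mu hm) (fun A => muh_ge0 mu hm A)
    (@muh_sigma R X U f mu hm).

Check fun (R : realType) (X : pseudoPMetricType R) (U : set X) (f : X -> X)
  (mu : {measure set (Borel X) -> \bar R}) (hm : hmeas U f) =>
  (muh_fun mu hm : {measure set (Borel {ptws nat -> X}) -> \bar R}).

Lemma Gamma_step (R : realType) (X : pseudoPMetricType R) (U : set X) f
  (s : {ptws nat -> X}) n :
  hausdorff_space X -> open U -> {within U, continuous f} ->
  Gamma_inf U f s -> U (s n) -> s n.+1 = f (s n).
Proof.
move=> hX oU cf Gs Usn.
rewrite continuous_open_subspace // in cf.
apply: hX => A B NA NB.
have cfx := cf (s n) (mem_set Usn).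
have NC : nbhs (s n) (U `&` f @^-1` B).
  apply: filterI; first by apply: open_nbhs_nbhs; split.
  exact: cfx.
have Nt : nbhs s ([set t : {ptws nat -> X} | (U `&` f @^-1` B) (t n)] `&`
                  [set t : {ptws nat -> X} | A (t n.+1)]).
  by apply: filterI; apply: ev_nbhs.
have [t [[x Ox <-] [[_ Bx] Ax]]] := Gs _ Nt.
by exists (iter n.+1 f x); split.
Qed.

Lemma Gamma_orbit (R : realType) (X : pseudoPMetricType R) (U : set X) f
  (s : {ptws nat -> X}) :
  hausdorff_space X -> open U -> {within U, continuous f} ->
  Gamma_inf U f s -> (forall n, U (s n)) -> s = orbit_seq f (s 0%N).
Proof.
move=> hX oU cf Gs Us; apply: funext => n.
elim: n => [|n IH] //.
by rewrite (Gamma_step hX oU cf Gs (Us n)) IH.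
Qed.

Lemma orbit_Gamma (R : realType) (X : pseudoPMetricType R) (U : set X) f x :
  Omega_inf U f x -> Gamma_inf U f (orbit_seq f x).
Proof. by move=> Ox; apply: subset_closure; exists x. Qed.

Lemma join_eq (R : realType) (X : pseudoPMetricType R) (U : set X) (f : X -> X)
  (mu : {measure set (Borel X) -> \bar R}) (hm : hmeas U f)
  k (Q : 'I_k -> set {ptws nat -> X}) n :
  join_entropy (muh_fun mu hm) (Gamma_inf U f) (@shift_seq X) Q n =
  join_entropy mu (Omega_inf U f) f
    (fun j => Omega_inf U f `&` orbit_seq f @^-1` Q j) n.
Proof.
apply: eq_bigr => w _; congr (eta_ent (fine (mu _))).
apply/seteqP; split => x /=.
  move=> [Ox [Gx H]]; split => // i; split; first exact: Omega_iter.
  by rewrite /preimage /= orbit_iter; apply: H.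
move=> [Ox H]; split => //; split; first exact: orbit_Gamma.
by move=> i; rewrite -orbit_iter; case: (H i).
Qed.

Lemma KSP_eq (R : realType) (X : pseudoPMetricType R) (U : set X) (f : X -> X)
  (mu : {measure set (Borel X) -> \bar R}) (hm : hmeas U f)
  k (Q : 'I_k -> set {ptws nat -> X}) :
  KS_entropy_partition (muh_fun mu hm) (Gamma_inf U f) (@shift_seq X) Q =
  KS_entropy_partition mu (Omega_inf U f) f
    (fun j => Omega_inf U f `&` orbit_seq f @^-1` Q j).
Proof.
rewrite /KS_entropy_partition /=; have -> // : (fun n => join_entropy (muh_fun mu hm) (Gamma_inf U f) (@shift_seq X) Q n / n%:R) = (fun n => join_entropy mu (Omega_inf U f) f (fun j => Omega_inf U f `&` orbit_seq f @^-1` Q j) n / n%:R).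
apply: funext => n.
by rewrite join_eq.
Qed.

Lemma Gamma_meas (R : realType) (X : pseudoPMetricType R) (U : set X) (f : X -> X) :
  @measurable _ (Borel {ptws nat -> X}) (Gamma_inf U f).
Proof.
rewrite -[Gamma_inf U f]setCK; apply: measurableC; apply: openP_meas.
apply: closed_openC; exact: closed_closure.
Qed.

Lemma KS_eq (R : realType) (X : pseudoPMetricType R) (U : set X) (f : X -> X)
  (mu : {measure set (Borel X) -> \bar R}) (hm : hmeas U f) :
  @measurable _ (Borel X) (Omega_inf U f) ->
  KS_entropy (@measurable _ (Borel X)) mu (Omega_inf U f) f =
  KS_entropy (@measurable _ (Borel {ptws nat -> X})) (muh_fun mu hm)
    (Gamma_inf U f) (@shift_seq X).
Proof.
move=> mO; rewrite /KS_entropy; congr ereal_sup.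
apply/seteqP; split => e [k [P [hP ->]]]; last first.
  exists k, (fun j => Omega_inf U f `&` orbit_seq f @^-1` P j); split; last first.
    by rewrite KSP_eq.
  case: hP => mP sP dP cP; split.
  - by move=> j; apply: hm.
  - by move=> j x [].
  - move=> i j ij; rewrite setIACA setIid -preimage_setI (dP i j ij).
    by rewrite preimage_set0 setI0.
  - apply/seteqP; split => x; first by move=> [j _ []].
    move=> Ox; have := orbit_Gamma Ox; rewrite -cP => -[j _ Pj].
    by exists j.
case: hP => mP sP dP cP.
case: k P mP sP dP cP => [|k] P mP sP dP cP.
  have O0 : Omega_inf U f = set0.
    by rewrite -cP; apply/seteqP; split => x // [[]].
  exists 0%N, (fun _ => set0); split; last first.
    congr (_%:E); rewrite KSP_eq; congr KS_entropy_partition.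
    by apply: funext => -[].
  split => //.
  - by move=> _ x.
  - by move=> i j _; rewrite set0I.
  - rewrite /Gamma_inf O0 image_set0 closure0.
    by apply/seteqP; split => x // [[]].
pose P' (j : 'I_k.+1) := if j == ord0 then P j `|` ~` Omega_inf U f else P j.
have mP' j : @measurable _ (Borel X) (P' j).
  rewrite /P'; case: ifP => _ //; apply: measurableU => //.
  exact: measurableC.
have P'P j x : Omega_inf U f x -> P' j x <-> P j x.
  move=> Ox; rewrite /P'; case: ifP => _ //; split; last by left.
  by case.
pose Q j := Gamma_inf U f `&` [set s : {ptws nat -> X} | P' j (s 0%N)].
exists k.+1, Q; split; last first.
  congr (_%:E); rewrite KSP_eq; congr KS_entropy_partition.
  apply: funext => j; apply/seteqP; split => x.
    move=> Px; have Ox := sP j x Px; split => //; split.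
      exact: orbit_Gamma.
    by apply/(P'P j x Ox).
  by move=> [Ox [_ /(P'P j x Ox)]].
split.
- move=> j; apply: measurableI; first exact: Gamma_meas.
  exact: ev_meas.
- by move=> j s [].
- move=> i j ij; apply/seteqP; split => s // [[_ Pi] [_ Pj]].
  have dPx x : P i x -> P j x -> False.
    by move=> a b; have : (P i `&` P j) x by []; rewrite dP.
  move: Pi Pj; rewrite /P'.
  case: ifP => /eqP i0; case: ifP => /eqP j0.
  + by move: ij; rewrite i0 j0 eqxx.
  + move=> [Pi|NO] Pj; first exact: dPx Pi Pj.
    by apply: NO; apply: sP Pj.
  + move=> Pi [Pj|NO]; first exact: dPx Pi Pj.
    by apply: NO; apply: sP Pi.
  + exact: dPx.
- apply/seteqP; split => s; first by move=> [j _ []].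
  move=> Gs; have [Os|NOs] := pselect (Omega_inf U f (s 0%N)).
    move: (Os); rewrite -cP => -[j _ Pj]; exists j => //; split => //.
    by apply/(P'P j _ Os).
  exists ord0 => //; split => //; rewrite /P' eqxx; by right.
Qed.

Unset Implicit Arguments.

Lemma null0 (d : measure_display) (T : measurableType d) (R : realType)
  (nu : {measure set T -> \bar R}) (N A : set T) :
  measurable N -> measurable A -> A `<=` N -> nu N = 0%E -> nu A = 0%E.
Proof.
move=> mN mA AN nN; apply/eqP; rewrite eq_le measure_ge0 andbT -nN.
by apply: le_measure => //; rewrite inE.
Qed.

Lemma null_restr (d : measure_display) (T : measurableType d) (R : realType)
  (nu : {measure set T -> \bar R}) (N A : set T) :
  measurable N -> measurable A -> nu N = 0%E -> nu A = nu (A `&` ~` N).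
Proof.
move=> mN mA nN.
rewrite {1}(_ : A = (A `&` ~` N) `|` (A `&` N)); last first.
  by rewrite -setIUr setUCl setIT.
rewrite measureU0 //; first exact: measurableI (measurableC mN).
- exact: measurableI.
- apply: (@null0 _ _ _ nu N) => //; (try exact: measurableI); by move=> x [].
Qed.

Theorem proposition1p6 (R : realType) (X : pseudoPMetricType R)
  (U : set X) (f : X -> X)
  (mu : probability (Borel X) R) :
  hausdorff_space X -> compact [set: X] ->
  open_dense_defined_map U f ->
  good_wrt_iterates U f ->
  f_invariant U f mu ->
  mu (I_inf U f) = 0%E ->
  exists muh : {measure set (Borel {ptws nat -> X}) -> \bar R},
    [/\ muh (~` Gamma_inf U f) = 0%E
         /\ (forall B : set (Borel X), measurable B ->
           (muh (@proj1_seq X @^-1` B) <= mu B)%E),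
        muh (Gamma_inf U f) = 1%E,
        (forall A : set (Borel {ptws nat -> X}), measurable A ->
           muh (@shift_seq X @^-1` A) = muh A),
        (forall nu : {measure set (Borel {ptws nat -> X}) -> \bar R},
           nu (~` Gamma_inf U f) = 0%E ->
           (forall B : set (Borel X), measurable B ->
              (nu (@proj1_seq X @^-1` B) <= mu B)%E) ->
           nu (Gamma_inf U f) = 1%E ->
           (forall A : set (Borel {ptws nat -> X}), measurable A ->
              nu (@shift_seq X @^-1` A) = nu A) ->
           forall A : set (Borel {ptws nat -> X}), measurable A -> nu A = muh A)
      & KS_entropy (@measurable _ (Borel X)) mu (Omega_inf U f) f
        = KS_entropy (@measurable _ (Borel {ptws nat -> X})) muh
            (Gamma_inf U f) (@shift_seq X)].
Proof.
move=> hX _ [oU [_ cf]] _ finv muI.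
have mO := Omega_meas oU cf.
have hm : hmeas U f := fun A mA => orbit_meas oU cf mA.
have muO : mu (Omega_inf U f) = 1%E.
  rewrite -(probability_setT mu) -(setUCr (Omega_inf U f)) measureU0 //.
  exact: measurableC.
exists (muh_fun mu hm : {measure set (Borel {ptws nat -> X}) -> \bar R}).
split.
- split.
  + rewrite /= /muh_fun (_ : _ `&` _ = set0) ?measure0 //.
    by apply/seteqP; split => x // [Ox]; apply; apply: orbit_Gamma.
  + move=> B mB; rewrite /= /muh_fun; apply: le_measure.
    * by rewrite inE; apply: hm; apply: ev_meas.
    * by rewrite inE.
    * by move=> x [].
- rewrite /= /muh_fun.
    rewrite (_ : _ `&` _ = Omega_inf U f) //.
  apply/seteqP; split => x; first by case.
  by move=> Ox; split => //; apply: orbit_Gamma.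
- move=> A mA; rewrite /= /muh_fun -[in RHS]finv; last exact: (hm _ mA).
  congr (mu _); apply/seteqP; split => x.
    move=> [Ox HA]; split; first exact: Omega_U.
    split; first exact: Omega_f.
    by rewrite /preimage /= (orbit_iter f x 1).
  move=> [Ux [Ofx HA]]; split.
    by case=> [|n] //; rewrite iterSr; apply: Ofx.
  by move: HA; rewrite /preimage /= (orbit_iter f x 1).
- move=> nu nuG nuB nuGam nuS A mA.
  rewrite /= /muh_fun.
  set C := Omega_inf U f `&` orbit_seq f @^-1` A.
  have mC : @measurable _ (Borel X) C := hm A mA.
  have mG := @Gamma_meas R X U f.
  have nuT : nu setT = 1%E.
    rewrite -(setUCr (Gamma_inf U f)) measureU0 //; exact: measurableC.
  have nuB' : forall B : set (Borel X), measurable B ->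
      nu (@proj1_seq X @^-1` B) = mu B.
    move=> B mB; apply/eqP; rewrite eq_le nuB //=.
    have mPB : @measurable _ (Borel {ptws nat -> X}) (@proj1_seq X @^-1` B) := ev_meas 0%N mB.
    have mPC : @measurable _ (Borel {ptws nat -> X}) (@proj1_seq X @^-1` (~` B)) :=
      ev_meas 0%N (measurableC mB).
    have sum1 : (nu (@proj1_seq X @^-1` B) + nu (@proj1_seq X @^-1` (~` B)) = 1)%E.
      rewrite -measureU //; last by rewrite -preimage_setI setICr preimage_set0.
      by rewrite -preimage_setU setUCr preimage_setT; exact: nuT.
    have mu1 : (mu B + mu (~` B) = 1)%E.
      rewrite -measureU //; first by rewrite setUCr; exact: probability_setT.
      - exact: measurableC.
      - by rewrite setICr.
    have fin : mu (~` B) \is a fin_num := fin_num_measure mu _ (measurableC mB).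
    rewrite -(leeD2rE _ _ fin) mu1 -sum1 leeD2l // nuB //; exact: measurableC.
  have mE n : @measurable _ (Borel {ptws nat -> X}) [set s : {ptws nat -> X} | ~ Omega_inf U f (s n)].
    exact: (@ev_meas R X n (~` Omega_inf U f) (measurableC mO)).
  have nuE : forall n, nu [set s : {ptws nat -> X} | ~ Omega_inf U f (s n)] = 0%E.
    elim=> [|n IH].
      apply/eqP; rewrite eq_le measure_ge0 andbT -muI.
      exact: nuB (measurableC mO).
    have := nuS _ (mE n); rewrite IH => <-.
    by [].
  set N := ~` Gamma_inf U f `|`
           \bigcup_n [set s : {ptws nat -> X} | ~ Omega_inf U f (s n)].
  have mN : @measurable _ (Borel {ptws nat -> X}) N.
    apply: measurableU; first exact: measurableC.
    exact: bigcupT_measurable.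
  have nuN : nu N = 0%E.
    rewrite /N setUC measureU0 //; last exact: measurableC.
    - apply/eqP; rewrite eq_le measure_ge0 andbT.
      have h : (nu (\bigcup_n [set s : {ptws nat -> X} | ~ Omega_inf U f (s n)])
         <= \sum_(0 <= n <oo) nu [set s : {ptws nat -> X} | ~ Omega_inf U f (s n)])%E.
        apply: measure_sigma_subadditive => //; exact: bigcupT_measurable.
      rewrite eseries0 in h; first exact: h.
      by move=> i _ _; apply: nuE.
    - exact: bigcupT_measurable.
  have mPC : @measurable _ (Borel {ptws nat -> X}) (@proj1_seq X @^-1` C) := ev_meas 0%N mC.
  rewrite (@null_restr _ _ _ nu _ _ mN mA nuN) -(nuB' C mC) (@null_restr _ _ _ nu _ _ mN mPC nuN).
  congr (nu _); apply/seteqP; split => s [Hs NN]; split => //.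
  - have Gs : Gamma_inf U f s.
      by apply: contrapT => nG; apply: NN; left.
    have Os n : Omega_inf U f (s n).
      by apply: contrapT => nO; apply: NN; right; exists n.
    have se := Gamma_orbit hX oU cf Gs (fun n => Omega_U (Os n)).
    split; first exact: (Os 0%N).
    by rewrite /preimage /= -se.
  - have Gs : Gamma_inf U f s.
      by apply: contrapT => nG; apply: NN; left.
    have Os n : Omega_inf U f (s n).
      by apply: contrapT => nO; apply: NN; right; exists n.
    have se := Gamma_orbit hX oU cf Gs (fun n => Omega_U (Os n)).
    by rewrite se; case: Hs.
- exact: KS_eq.
Qed.
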